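(* Let $m\geq 2$. Up to isomorphism, $\operatorname{Turan}(2m+2, m+1)$ is the unique connected graph with parameters $\bigl(2m, 4\binom{m}{2}\bigr)$.
   Context: All graphs are finite, simple and undirected. The $K_3$-degree of a vertex $v$ is the number of triangles containing $v$. A graph $G$ has parameters $(r_2,r_3)$ if every vertex has degree $r_2$ and every vertex has $K_3$-degree $r_3$. For $r\mid n$, $\operatorname{Turan}(n,r)$ is the complete multipartite graph on $n$ vertices with $r$ parts each of size $n/r$; thus $\operatorname{Turan}(2m+2,m+1)$ is the complete multipartite graph with $m+1$ parts of size $2$. *)

(* Defs.v *)
From mathcomp Require Import all_boot.
Set Implicit Arguments. Unset Strict Implicit. Unset Printing Implicit Defensive.

Definition simple_graph (T : finType) (e : rel T) : Prop :=
  symmetric e /\ irreflexive e.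

Definition deg (T : finType) (e : rel T) (v : T) : nat := #|[set y | e v y]|.

Definition is_triangle (T : finType) (e : rel T) (t : {set T}) : bool :=
  (#|t| == 3) && [forall y in t, forall z in t, (y != z) ==> e y z].

Definition k3deg (T : finType) (e : rel T) (v : T) : nat :=
  #|[set t : {set T} | is_triangle e t && (v \in t)]|.

Definition has_params (T : finType) (e : rel T) (r2 r3 : nat) : Prop :=
  forall v : T, deg e v = r2 /\ k3deg e v = r3.

Definition connected_graph (T : finType) (e : rel T) : Prop :=
  0 < #|T| /\ forall x y : T, connect e x y.

(* Turan(n, r): complete multipartite graph on vertices 0..n-1, with the
   r parts {i | i mod r = k}, each of size n/r when r divides n. *)
Definition turan (n r : nat) : rel 'I_n := fun i j => (i %% r) != (j %% r).
Arguments turan n r : clear implicits.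

Definition graph_iso (T S : finType) (e : rel T) (f : rel S) : Prop :=
  exists phi : T -> S, bijective phi /\ forall x y, f (phi x) (phi y) = e x y.

(* Main.v *)
Require Import Defs.
From mathcomp Require Import all_boot zify.
Set Implicit Arguments. Unset Strict Implicit. Unset Printing Implicit Defensive.

Section G.
Variables (T : finType) (e : rel T).
Hypotheses (esym : symmetric e) (eirr : irreflexive e).

Definition nb x := [set y | e x y].
Definition lam x y := #|nb x :&: nb y|.
Definition outd x y := #|nb y :\: nb x :\ x|.

Lemma in_nb x y : (y \in nb x) = e x y.
Proof. by rewrite inE. Qed.

Lemma deg_split x y : e x y -> #|nb y| = 1 + lam x y + outd x y.
Proof.
move=> exy; rewrite /lam /outd -(cardsID (nb x) (nb y)) setIC.
rewrite (cardsD1 x (nb y :\: nb x)) !inE eirr esym exy /=; lia.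
Qed.

Lemma card_sumb (A : {set T}) : #|A| = \sum_i (i \in A).
Proof. rewrite -sum1_card big_mkcond; apply: eq_bigr => i _; by case: (i \in A). Qed.

Lemma card_sumbS (S : {set {set T}}) (P : pred {set T}) :
  \sum_(t in S) P t = #|[set t in S | P t]|.
Proof.
rewrite -sum1_card big_mkcond [RHS]big_mkcond; apply: eq_bigr => i _.
rewrite !inE; by case: (i \in S); case: (P i).
Qed.

Lemma tri_edge t a b : is_triangle e t -> a \in t -> b \in t -> a != b -> e a b.
Proof.
move=> /andP[_ /forallP H] ha hb nab.
by have := H a; rewrite ha /= => /forallP /(_ b); rewrite hb nab.
Qed.

Lemma in3P (a v y z : T) : a \in [set v; y; z] -> [\/ a = v, a = y | a = z].
Proof. by rewrite !inE => /orP[/orP[]|] /eqP ->; [apply: Or31|apply: Or32|apply: Or33]. Qed.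

Lemma tri3 v y z : e v y -> e v z -> e y z -> is_triangle e [set v; y; z].
Proof.
move=> evy evz eyz.
have nvy : v != y by apply/eqP=> E; move: evy; rewrite E eirr.
have nvz : v != z by apply/eqP=> E; move: evz; rewrite E eirr.
have nyz : y != z by apply/eqP=> E; move: eyz; rewrite E eirr.
apply/andP; split.
  rewrite setUC cardsU1 cards2 nvy !inE.
  by rewrite ![z == _]eq_sym (negbTE nvz) (negbTE nyz).
apply/forallP=> a; apply/implyP=> ha; apply/forallP=> b; apply/implyP=> hb.
apply/implyP=> nab.
move: nab; case/in3P: ha => ->; case/in3P: hb => ->; rewrite ?eqxx //= => _;
  by rewrite // esym.
Qed.

Lemma tri_sum v : 2 * k3deg e v = \sum_(y in nb v) lam v y.
Proof.
set S := [set t : {set T} | is_triangle e t && (v \in t)].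
have H1 : forall t, t \in S -> #|t :\ v| = 2.
  move=> t; rewrite inE => /andP[/andP[/eqP c3 _] vt].
  by move: c3; rewrite (cardsD1 v t) vt; case.
have -> : 2 * k3deg e v = \sum_(t in S) #|t :\ v|.
  by rewrite (eq_bigr (fun _ => 2)) // sum_nat_const mulnC.
rewrite (eq_bigr (fun t => \sum_y (y \in t :\ v))); last by move=> t _; rewrite card_sumb.
rewrite exchange_big /= [RHS]big_mkcond; apply: eq_bigr => y _.
rewrite card_sumbS.
case: ifP => evy; last first.
  apply/eqP; rewrite cards_eq0; apply/eqP/setP=> t; rewrite !inE.
  apply/negP=> /andP[/andP[tt vt] /andP[nyv yt]].
  by move: (tri_edge tt vt yt); rewrite eq_sym nyv -in_nb evy => /(_ isT).
rewrite in_nb in evy.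
have nvy : v != y by apply/eqP=> E; move: evy; rewrite E eirr.
rewrite /lam -(@card_in_imset _ _ (fun z => [set v; y; z])).
  apply: eq_card => t; rewrite !inE; apply/idP/idP.
    move=> /andP[/andP[tt vt] /andP[nyv yt]].
    have c2 := H1 t; rewrite inE tt vt /= in c2; have := c2 isT.
    rewrite (cardsD1 y) !inE nyv yt /= => [[]] /eqP /cards1P [z Hz].
    have : z \in t :\ v :\ y by rewrite Hz set11.
    rewrite !inE => /and3P[nzy nzv zt].
    apply/imsetP; exists z.
      by rewrite !inE (tri_edge tt vt zt) 1?eq_sym // (tri_edge tt yt zt) 1?eq_sym.
    rewrite -{1}(setD1K vt) -(setD1K (_ : y \in t :\ v)); last by rewrite !inE nyv.
    by rewrite Hz setUA.
  move=> /imsetP[z]; rewrite !inE => /andP[evz eyz] ->.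
  by rewrite tri3 //= !inE !eqxx /= orbT eq_sym nvy.
move=> z1 z2; rewrite !inE => /andP[e1 f1] /andP[e2 f2] E.
have : z1 \in [set v; y; z2] by rewrite -E !inE eqxx !orbT.
case/in3P => E1; try by [].
  by move: e1; rewrite E1 eirr.
by move: f1; rewrite E1 eirr.
Qed.

End G.


Lemma bin2_2 m : 2 * 'C(m, 2) = m * (m - 1).
Proof. elim: m => [|m IH] //; rewrite binS bin1 mulnDr IH; case: m {IH} => //= m; nia. Qed.

Lemma sum_ge (T : finType) (A : {set T}) (F : T -> nat) k :
  (forall b, b \in A -> k <= F b) -> k * #|A| <= \sum_(b in A) F b.
Proof.
move=> H; rewrite mulnC -sum_nat_const; exact: leq_sum.
Qed.

Section K.
Variables (T : finType) (e : rel T) (m : nat).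
Hypotheses (esym : symmetric e) (eirr : irreflexive e).
Hypothesis hdeg : forall v, #|nb e v| = 2 * m.
Hypothesis htri : forall v, k3deg e v = 4 * 'C(m, 2).

Lemma lam_sym x y : lam e x y = lam e y x.
Proof. by rewrite /lam setIC. Qed.

Lemma outd_sym x y : e x y -> outd e x y = outd e y x.
Proof.
move=> exy; have h1 := deg_split esym eirr exy.
rewrite esym in exy; have h2 := deg_split esym eirr exy.
rewrite !hdeg lam_sym in h1 h2; lia.
Qed.

Lemma sum_outd w : \sum_(a in nb e w) outd e a w = 2 * m.
Proof.
have H : \sum_(a in nb e w) (1 + lam e w a + outd e w a) = 2 * m * (2 * m).
  rewrite (eq_bigr (fun _ => 2 * m)); first by rewrite sum_nat_const hdeg.
  by move=> a; rewrite in_nb => ewa; rewrite -(deg_split esym eirr ewa) hdeg.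
rewrite !big_split /= -tri_sum // htri sum1_card hdeg in H.
have := bin2_2 m.
rewrite (eq_bigr (fun a => outd e w a)); last by move=> a; rewrite in_nb => h; rewrite outd_sym // esym.
nia.
Qed.
End K.


Section K2.
Variables (T : finType) (e : rel T) (m : nat).
Hypotheses (esym : symmetric e) (eirr : irreflexive e).
Hypothesis hdeg : forall v, #|nb e v| = 2 * m.
Hypothesis htri : forall v, k3deg e v = 4 * 'C(m, 2).

Lemma sum_outd' w : \sum_(a in nb e w) outd e w a = 2 * m.
Proof.
rewrite -(sum_outd esym eirr hdeg htri w); apply: eq_bigr => a; rewrite in_nb => h.
by rewrite (outd_sym esym eirr hdeg).
Qed.

Lemma outd_ge1 x y z : e x y -> e x z -> ~~ e y z -> y != z -> 1 <= outd e x y.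
Proof.
move=> exy exz nyz yz; rewrite (outd_sym esym eirr hdeg exy) /outd.
apply/card_gt0P; exists z; by rewrite !inE exz (negbTE nyz) andbT eq_sym yz.
Qed.

Lemma outd_le1 w a : e w a -> outd e w a <= 1.
Proof.
move=> ewa; rewrite leqNgt; apply/negP => d2.
set d := outd e w a in d2.
have eaw : e a w by rewrite esym.
set X := nb e a :&: nb e w.
have cX : #|X| = lam e w a by rewrite /X /lam setIC.
have hs := deg_split esym eirr ewa; rewrite hdeg -/d in hs.
have Sa := sum_outd' a.
rewrite (big_setD1 w) ?in_nb // (big_setID (nb e w)) /= in Sa.
have EX : (nb e a :\ w) :&: nb e w = X.
  apply/setP=> b; rewrite !inE; case: (b =P w) => [->|_] //=.
  by rewrite (eirr w) andbF.
rewrite EX in Sa.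
have SZ : #|(nb e a :\ w) :\: nb e w| <= \sum_(b in (nb e a :\ w) :\: nb e w) outd e a b.
  rewrite -[X in X <= _]mul1n; apply: sum_ge => b; rewrite !inE => /andP[nbw /andP[bw eab]].
  by apply: (outd_ge1 eab eaw); rewrite // esym.
have cZ : #|(nb e a :\ w) :\: nb e w| = d.
  by rewrite /d /outd !setDDl setUC.
have Sw := sum_outd' w.
rewrite (big_setD1 a) ?in_nb // (big_setID (nb e a)) /= in Sw.
have EX' : (nb e w :\ a) :&: nb e a = X.
  apply/setP=> b; rewrite !inE; case: (b =P a) => [->|_] /=.
    by rewrite (eirr a).
  by rewrite andbC.
rewrite EX' in Sw.
have SY : #|(nb e w :\ a) :\: nb e a| <= \sum_(b in (nb e w :\ a) :\: nb e a) outd e w b.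
  rewrite -[X in X <= _]mul1n; apply: sum_ge => b; rewrite !inE => /andP[nba /andP[ba ewb]].
  by apply: (outd_ge1 ewb ewa); rewrite // esym.
have cY : #|(nb e w :\ a) :\: nb e a| = d.
  by rewrite /d (outd_sym esym eirr hdeg ewa) /outd !setDDl setUC.
have SX : d * #|X| <= \sum_(x in X) (outd e a x + outd e w x).
  apply: sum_ge => x; rewrite !inE => /andP[eax ewx].
  rewrite (outd_sym esym eirr hdeg eax).
  set Z := (nb e a :\ w) :\: nb e w.
  have h1 : #|Z :\: nb e x| <= outd e x a.
    apply: subset_leq_card; apply/subsetP => z; rewrite !inE.
    move=> /andP[nxz /andP[nwz /andP[_ eaz]]].
    have zx : z != x by apply/eqP=> E; move: nwz; rewrite E ewx.
    by rewrite eaz nxz zx.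
  have h2 : #|Z :&: nb e x| <= outd e w x.
    rewrite /outd; apply: subset_leq_card; apply/subsetP => z; rewrite !inE.
    move=> /andP[/andP[nwz /andP[zw _]] exz]; by rewrite zw nwz exz.
  have := cardsID (nb e x) Z; rewrite cZ; lia.
rewrite big_split /= in SX.
rewrite cX in SX.
rewrite (outd_sym esym eirr hdeg eaw) -/d in Sa.
have := leq_mul (d2 : 2 <= d) (leqnn (lam e w a)).
lia.
Qed.

End K2.


Section K3.
Variables (T : finType) (e : rel T) (m : nat).
Hypotheses (esym : symmetric e) (eirr : irreflexive e) (m2 : 2 <= m).
Hypothesis hdeg : forall v, #|nb e v| = 2 * m.
Hypothesis htri : forall v, k3deg e v = 4 * 'C(m, 2).

Lemma outd_eq1 w a : e w a -> outd e w a = 1.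
Proof.
move=> ewa; have le1 := outd_le1 esym eirr hdeg htri ewa.
apply/eqP; rewrite eqn_leq le1 /=; rewrite lt0n; apply/negP => /eqP z.
have S : outd e w a + \sum_(i in nb e w :\ a) outd e w i = 2 * m.
  by rewrite -(big_setD1 a) ?in_nb // (sum_outd' esym eirr hdeg htri w).
rewrite z add0n in S.
have : \sum_(i in nb e w :\ a) outd e w i <= \sum_(i in nb e w :\ a) 1.
  apply: leq_sum => i; rewrite !inE => /andP[_ h].
  by have := outd_le1 esym eirr hdeg htri h.
rewrite sum1_card S; have := cardsD1 a (nb e w); rewrite in_nb ewa hdeg; lia.
Qed.

Lemma lam_eq x y : e x y -> lam e x y = 2 * m - 2.
Proof.
move=> exy; have := deg_split esym eirr exy; rewrite hdeg outd_eq1 //; lia.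
Qed.

Lemma neq_of_e x y : e x y -> x != y.
Proof. by move=> h; apply/eqP=> E; move: h; rewrite E eirr. Qed.

Lemma partner c u v w : e c u -> e c v -> u != v -> ~~ e u v ->
  e c w -> w != u -> w != v -> e u w.
Proof.
move=> ecu ecv uv nuv ecw wu wv; apply: contraT => nuw.
have h1 : outd e u c = 1 by apply: outd_eq1; rewrite esym.
have : #|[set v; w]| <= outd e u c.
  rewrite /outd; apply: subset_leq_card; apply/subsetP => z; rewrite !inE.
  have vu : v != u by rewrite eq_sym.
  by case/orP => /eqP ->; rewrite ?ecv ?ecw ?nuv ?nuw ?wu ?vu ?andbT.
by rewrite cards2 eq_sym wv h1.
Qed.

Lemma twin_sub x y c : x != y -> ~~ e x y -> e c x -> e c y -> nb e x \subset nb e y.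
Proof.
move=> xy nxy ecx ecy.
have A : nb e x :\: nb e y \subset nb e x :\: nb e c :\ c.
  apply/subsetP => u; rewrite !inE => /andP[nyu exu].
  rewrite exu andbT; apply/andP; split.
    by apply/eqP=> E; move: nyu; rewrite E esym ecy.
  apply/negP => ecu.
  have uy : u != y by apply/eqP=> E; move: exu; rewrite E (negbTE nxy).
  have ux : u != x by apply: neq_of_e; rewrite esym.
  move: nyu; rewrite (partner ecy ecx) // 1?eq_sym // esym //.
have cA := subset_leq_card A; rewrite -/(outd e c x) outd_eq1 // in cA.
apply/subsetP => z; rewrite !inE => exz; apply/negPn/negP => nyz.
have Z1 : nb e x :\: nb e y = [set z].
  apply/eqP; rewrite eq_sym eqEcard cards1 cA andbT sub1set !inE exz nyz //.
have := lam_eq exz; rewrite /lam => cl.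
have : 0 < #|nb e x :&: nb e z| by rewrite cl; lia.
case/card_gt0P => c'; rewrite !inE => /andP[exc ezc].
have c'y : e y c'.
  apply/negPn/negP => nyc.
  have : c' \in nb e x :\: nb e y by rewrite !inE exc nyc.
  by rewrite Z1 !inE => /eqP Ec; move: ezc; rewrite Ec eirr.
have zy : z != y by apply/eqP=> E; move: exz; rewrite E (negbTE nxy).
have zx : z != x by rewrite eq_sym; apply: neq_of_e.
have ec'y : e c' y by rewrite esym.
have ec'x : e c' x by rewrite esym.
have ec'z : e c' z by rewrite esym.
have yx : y != x by rewrite eq_sym.
have nyx : ~~ e y x by rewrite esym.
by rewrite (partner ec'y ec'x yx nyx ec'z zy zx) in nyz.
Qed.

Lemma twins_eq x y c : x != y -> ~~ e x y -> e c x -> e c y -> nb e x = nb e y.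
Proof.
move=> xy nxy ecx ecy; apply/eqP; rewrite eqEcard (twin_sub xy nxy ecx ecy) /=.
by rewrite !hdeg.
Qed.

Hypothesis hconn : forall x y, connect e x y.

Definition tw v := [set u | nb e u == nb e v].

Lemma all_in v y : y \in nb e v :|: tw v.
Proof.
set C := nb e v :|: tw v.
have step : forall a b, e a b -> a \in C -> b \in C.
  move=> a b eab; rewrite !inE => /orP[eva|/eqP Na].
    case evb: (e v b); first by [].
    case: (b =P v) => [->|/eqP bv]; first by rewrite eqxx orbT.
    have vb : v != b by rewrite eq_sym.
    have eav : e a v by rewrite esym.
    have Nb := twins_eq vb (negbT evb) eav eab.
    by rewrite Nb eqxx orbT.
  have evb : e v b by rewrite -in_nb -Na in_nb.
  by rewrite evb.
have cl : closed e C.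
  move=> a b eab; apply/idP/idP; first exact: step.
  by apply: step; rewrite esym.
rewrite -(closed_connect cl (hconn v y)).
by rewrite !inE eqxx orbT.
Qed.

Lemma tw_nb v u : u \in tw v -> u \notin nb e v.
Proof. by rewrite inE => /eqP <-; rewrite in_nb eirr. Qed.

Lemma card_tw v : #|tw v| = 2.
Proof.
have : 0 < #|nb e v| by rewrite hdeg; lia.
case/card_gt0P => a; rewrite in_nb => eva.
have o1 := outd_eq1 eva.
have : 0 < outd e v a by rewrite o1.
case/card_gt0P => z; rewrite !inE => /and3P[zv nvz eaz].
have vz : v != z by rewrite eq_sym.
have twz : nb e v = nb e z by apply: (twins_eq vz nvz _ eaz); rewrite esym.
apply/eqP; rewrite eqn_leq; apply/andP; split.
  have : tw v \subset nb e a :\: nb e v.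
    apply/subsetP => u tu; rewrite inE (tw_nb tu) /=.
    move: tu; rewrite inE => /eqP Nu; rewrite in_nb esym -in_nb Nu in_nb //.
  have c2 : #|nb e a :\: nb e v| = 2.
    rewrite (cardsD1 v (nb e a :\: nb e v)) -/(outd e v a) o1.
    by rewrite !inE (eirr v) /= esym eva.
  by move/subset_leq_card; rewrite c2.
have : [set v; z] \subset tw v.
  by apply/subsetP => u; rewrite !inE => /orP[]/eqP ->; rewrite ?twz eqxx.
by move/subset_leq_card; rewrite cards2 vz.
Qed.

Lemma card_T : 0 < #|T| -> #|T| = 2 * m + 2.
Proof.
case/card_gt0P => x _.
have -> : #|T| = #|nb e x :|: tw x|.
  by apply/eq_card => y; rewrite all_in.
have := cardsUI (nb e x) (tw x).
have -> : nb e x :&: tw x = set0.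
  apply/setP => u; rewrite inE in_set0; apply/negP => /andP[exu tu].
  by move: (tw_nb tu); rewrite exu.
rewrite cards0 hdeg card_tw; lia.
Qed.

Lemma Qprop x : #|[set y | (y != x) && ~~ e x y]| = 1.
Proof.
have -> : [set y | (y != x) && ~~ e x y] = tw x :\ x.
  apply/setP => y; rewrite !inE; case: (y =P x) => //= _.
  have := all_in x y; rewrite !inE => /orP[exy|/eqP Ny].
    rewrite exy /=; symmetry; apply/negbTE/eqP => Ny.
    by move: exy; rewrite -in_nb -Ny in_nb eirr.
  by rewrite Ny eqxx -in_nb -Ny in_nb eirr.
have := cardsD1 x (tw x); rewrite !inE eqxx card_tw /=; lia.
Qed.

End K3.


Section Q.
Variables (T : finType) (e : rel T).
Hypotheses (esym : symmetric e) (eirr : irreflexive e).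
Hypothesis hQ : forall x, #|[set y | (y != x) && ~~ e x y]| = 1.

Definition pp x := odflt x [pick y | (y != x) && ~~ e x y].

Lemma ppP x : [set y | (y != x) && ~~ e x y] = [set pp x].
Proof.
have /cards1P [z Hz] : #|[set y | (y != x) && ~~ e x y]| == 1 by rewrite hQ.
rewrite Hz /pp; case: pickP => [y Hy|H].
  have : y \in [set y | (y != x) && ~~ e x y] by rewrite inE.
  by rewrite Hz inE => /eqP ->.
have : z \in [set y | (y != x) && ~~ e x y] by rewrite Hz set11.
by rewrite inE H.
Qed.

Lemma e_pp x y : e x y = (y != x) && (y != pp x).
Proof.
have := ppP x => /setP /(_ y); rewrite !inE.
case: (y =P x) => [->|_] /=; first by rewrite eirr.
by move=> <-; rewrite negbK.
Qed.

Lemma pp_neq x : pp x != x.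
Proof. by have := ppP x => /setP /(_ (pp x)); rewrite !inE eqxx => /andP[]. Qed.

Lemma ppK x : pp (pp x) = x.
Proof.
have := ppP (pp x) => /setP /(_ x); rewrite !inE esym e_pp eqxx andbF /=.
rewrite eq_sym pp_neq /= => H; apply/eqP; by rewrite eq_sym -H.
Qed.

Lemma pp_inj : injective pp.
Proof. exact: can_inj ppK. Qed.

Lemma nb_card x : #|nb e x| = #|T| - 2.
Proof.
have -> : nb e x = ~: [set x; pp x].
  by apply/setP => y; rewrite !inE e_pp negb_or.
have := cardsC [set x; pp x]; rewrite cards2 eq_sym pp_neq; lia.
Qed.

Lemma lam_card x y : e x y -> lam e x y = #|T| - 4.
Proof.
move=> exy; rewrite /lam.
have D : nb e x :\: nb e y = [set y; pp y].
  apply/setP => u; rewrite !inE !e_pp.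
  move: exy; rewrite e_pp => /andP[yx ypx].
  case: (u =P y) => [->|uy] /=; first by rewrite yx ypx.
  case: (u =P pp y) => [->|upy] /=.
    rewrite (inj_eq pp_inj) yx andbT.
    by apply/negP => /eqP E; move: ypx; rewrite -E ppK eqxx.
  by case: (u == x); case: (u == pp x).
have := cardsID (nb e y) (nb e x); rewrite D cards2 eq_sym pp_neq nb_card.
rewrite setIC; move=> h; have := nb_card x; lia.
Qed.

Lemma Q_params m : #|T| = 2 * m + 2 -> has_params e (2 * m) (4 * 'C(m, 2)).
Proof.
move=> hT v; split.
  by change (#|nb e v| = 2 * m); rewrite nb_card hT; lia.
have h := tri_sum esym eirr v.
rewrite (eq_bigr (fun _ => #|T| - 4)) in h; last by move=> y; rewrite in_nb; apply: lam_card.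
rewrite sum_nat_const nb_card hT in h.
have := bin2_2 m; nia.
Qed.

Lemma Q_conn m : 2 <= m -> #|T| = 2 * m + 2 -> connected_graph e.
Proof.
move=> m2 hT; split; first by rewrite hT; lia.
move=> x y.
case exy: (e x y); first exact: connect1.
case: (y =P x) => [->|/eqP yx]; first exact: connect0.
have ypx : y = pp x by move: exy; rewrite e_pp yx /= => /negbFE /eqP.
have : 0 < #|~: [set x; pp x]|.
  have := cardsC [set x; pp x]; rewrite cards2; case: (x != pp x); lia.
case/card_gt0P => w; rewrite !inE negb_or => /andP[wx wpx].
apply: (connect_trans (y := w)); apply: connect1.
  by rewrite e_pp wx wpx.
rewrite e_pp ypx eq_sym wpx /= (inj_eq pp_inj) eq_sym wx //.
Qed.

Definition RR := [set x | enum_rank x < enum_rank (pp x)].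

Lemma RR_pp x : (pp x \in RR) = (x \notin RR).
Proof.
rewrite !inE ppK.
case: (ltngtP (enum_rank x) (enum_rank (pp x))) => // E.
have : enum_rank x = enum_rank (pp x) by apply: val_inj.
by move/enum_rank_inj => E'; move: (pp_neq x); rewrite -E' eqxx.
Qed.

Definition rep x := if x \in RR then x else pp x.

Lemma rep_in x : rep x \in RR.
Proof. by rewrite /rep; case: ifP => // /negbT; rewrite -RR_pp. Qed.

Lemma rep_pp x : rep (pp x) = rep x.
Proof.
rewrite /rep RR_pp; case: (x \in RR) => //=; by rewrite ppK.
Qed.

Lemma rep_cases x : rep x = x \/ rep x = pp x.
Proof. by rewrite /rep; case: ifP; [left|right]. Qed.

Lemma rep_eq x y : (rep x == rep y) = (y == x) || (y == pp x).
Proof.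
case: (y =P x) => [->|yx]; first by rewrite eqxx.
case: (y =P pp x) => [->|ypx]; first by rewrite rep_pp eqxx.
apply/negbTE/eqP => E.
case: (rep_cases x) => Ex; case: (rep_cases y) => Ey; rewrite Ex Ey in E.
- by apply: yx.
- by apply: ypx; rewrite E ppK.
- by apply: ypx.
- by apply: yx; apply: pp_inj.
Qed.

Lemma card_RR : #|T| = #|RR| + #|RR|.
Proof.
have EQ : ~: RR = pp @: RR.
  apply/setP => u; rewrite inE; apply/idP/imsetP.
    by move=> nu; exists (pp u); rewrite ?ppK // RR_pp.
  by case=> v vR ->; rewrite -RR_pp ppK.
have := cardsC RR; rewrite EQ card_imset; [lia | exact: pp_inj].
Qed.

Definition kk x := #|[set u in RR | enum_rank u < enum_rank (rep x)]|.

Lemma kk_lt x : kk x < #|RR|.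
Proof.
have : [set u in RR | enum_rank u < enum_rank (rep x)] \subset RR :\ rep x.
  apply/subsetP => u; rewrite !inE => /andP[uR lt]; rewrite uR.
  suff -> : u != rep x by [].
  by apply/eqP => E; move: lt; rewrite E ltnn.
move/subset_leq_card; rewrite /kk.
have := cardsD1 (rep x) RR; rewrite rep_in; lia.
Qed.

Lemma kk_lt2 x y : enum_rank (rep x) < enum_rank (rep y) -> kk x < kk y.
Proof.
move=> lt.
have : [set u in RR | enum_rank u < enum_rank (rep x)] \subset
       [set u in RR | enum_rank u < enum_rank (rep y)] :\ rep x.
  apply/subsetP => u; rewrite !inE => /andP[uR lt']; rewrite uR (ltn_trans lt' lt).
  suff -> : u != rep x by [].
  by apply/eqP => E; move: lt'; rewrite E ltnn.
move/subset_leq_card; rewrite /kk.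
have := cardsD1 (rep x) [set u in RR | enum_rank u < enum_rank (rep y)].
rewrite in_set rep_in lt; lia.
Qed.

Lemma kk_eq x y : (kk x == kk y) = (rep x == rep y).
Proof.
apply/eqP/eqP => [E|E]; last by rewrite /kk E.
case: (ltngtP (enum_rank (rep x)) (enum_rank (rep y))) => lt.
- by have := kk_lt2 lt; rewrite E ltnn.
- by have := kk_lt2 lt; rewrite E ltnn.
- by apply: enum_rank_inj; apply: val_inj.
Qed.

Lemma modM k M (c : bool) : k < M -> (k + (if c then 0 else M)) %% M = k.
Proof. by move=> h; case: c; rewrite ?addn0 ?modnDr modn_small. Qed.

Lemma Q_iso m : #|T| = 2 * m + 2 -> graph_iso e (turan (2 * m + 2) (m + 1)).
Proof.
move=> hT.
have cR : #|RR| = m + 1 by have := card_RR; lia.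
have hlt : forall x, kk x + (if x \in RR then 0 else m + 1) < 2 * m + 2.
  by move=> x; have := kk_lt x; rewrite cR; case: (x \in RR); lia.
exists (fun x => Ordinal (hlt x)); split.
  apply: inj_card_bij; last by rewrite card_ord hT.
  move=> x y /(congr1 val) /= E.
  have kx := kk_lt x; have ky := kk_lt y; rewrite cR in kx ky.
  have [Ek ER] : kk x = kk y /\ (x \in RR) = (y \in RR).
    by move: E; case: (x \in RR); case: (y \in RR) => /=; split; lia.
  move/eqP: Ek; rewrite kk_eq rep_eq => /orP[/eqP //|/eqP yp].
  by move: ER; rewrite yp RR_pp; case: (x \in RR).
move=> x y; rewrite /turan /= !modM ?kk_lt -?cR ?kk_lt //.
by rewrite kk_eq rep_eq e_pp negb_or.
Qed.

End Q.


Lemma mod2M i M : i < M + M -> i %% M = (if i < M then i else i - M).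
Proof.
move=> h; case: ifP => h'; first by rewrite modn_small.
have hM : M <= i by rewrite leqNgt h'.
rewrite -{1}(subnK hM) modnDr modn_small //; lia.
Qed.

Lemma turan_partner M (i j : nat) : i < M + M -> j < M + M ->
  ((j != i) && (i %% M == j %% M)) = (j == (if i < M then i + M else i - M)).
Proof.
move=> hi hj; rewrite (mod2M hi) (mod2M hj).
case: ifP => a; case: ifP => b; apply/idP/idP => h; lia.
Qed.

Lemma iso_Q m (T : finType) (e : rel T) :
  graph_iso e (turan (2 * m + 2) (m + 1)) ->
  #|T| = 2 * m + 2 /\ forall x, #|[set y | (y != x) && ~~ e x y]| = 1.
Proof.
case=> phi [bphi he]; split; first by rewrite (bij_eq_card bphi) card_ord.
move=> x; case: (bphi) => g phig gphi.
have hj : (if phi x < m + 1 then phi x + (m + 1) else phi x - (m + 1)) < 2 * m + 2.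
  have := ltn_ord (phi x); case: ifP; lia.
apply/eqP/cards1P; exists (g (Ordinal hj)); apply/setP => y; rewrite !inE.
rewrite -he /turan negbK.
have -> : (y != x) = (phi y != phi x) by rewrite (inj_eq (bij_inj bphi)).
have -> : (y == g (Ordinal hj)) = (phi y == Ordinal hj).
  by rewrite -(inj_eq (bij_inj bphi)) gphi.
rewrite -val_eqE /=.
have Hi : (phi x : nat) < (m + 1) + (m + 1) by have := ltn_ord (phi x); lia.
have Hy : (phi y : nat) < (m + 1) + (m + 1) by have := ltn_ord (phi y); lia.
by rewrite -[phi y == Ordinal hj]val_eqE /= -(turan_partner Hi Hy).
Qed.

Theorem corollary5p3 (m : nat) : 2 <= m ->
  forall (T : finType) (e : rel T), simple_graph e ->
    (connected_graph e /\ has_params e (2 * m) (4 * 'C(m, 2)))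
    <-> graph_iso e (turan (2 * m + 2) (m + 1)).
Proof.
move=> m2 T e [esym eirr]; split.
  case=> [[hT hconn] hp].
  have hdeg : forall v, #|nb e v| = 2 * m by move=> v; case: (hp v).
  have htri : forall v, k3deg e v = 4 * 'C(m, 2) by move=> v; case: (hp v).
  have cT := card_T esym eirr m2 hdeg htri hconn hT.
  have hQ := Qprop esym eirr m2 hdeg htri hconn.
  by apply: (Q_iso esym eirr hQ); exact: cT.
move=> /iso_Q [cT hQ]; split.
  exact: (@Q_conn T e esym eirr hQ m m2 cT).
by apply: (Q_params esym eirr hQ); exact: cT.
Qed.
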